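(* Let \[P=\{x\in[0,2]^2 : 2x_1+x_2\le 5,\ -2x_1+3x_2\le 3\}\subseteq\mathbb{R}^2,\] with both variables integer, and let \[P_L=\{(x,z)\in\mathbb{R}^2\times[0,1]^4 : x\in P,\ x_i=z_{i1}+2z_{i2}\text{ for } i=1,2\},\] where $z=(z_{11},z_{12},z_{21},z_{22})$ and all six variables of $P_L$ are integer variables. Then \[\operatorname{proj}_x\big(\mathrm{SC}(P_L)\big)\subsetneq \mathrm{SC}(P).\]
   Context: Split sets and split closure. For $(\pi,\pi_0)\in\mathbb{Z}^n\times\mathbb{Z}$, the split set is $S(\pi,\pi_0)=\{x\in\mathbb{R}^n:\pi_0<\pi^Tx<\pi_0+1\}$. Let $J\subseteq\{1,\dots,n\}$ be the index set of integer variables, and let $\mathcal{S}_n(J)$ be the family of split sets $S(\pi,\pi_0)$ with $\pi\in\mathbb{Z}^n$, $\pi_j=0$ for $j\notin J$, and $\pi_0\in\mathbb{Z}$. For $X\subseteq\mathbb{R}^n$, the split closure is $\mathrm{SC}(X,J)=\bigcap_{S\in\mathcal{S}_n(J)}\mathrm{conv}(X\setminus S)$. Here $\mathrm{SC}(P)$ means $\mathrm{SC}(P,\{1,2\})$, and $\mathrm{SC}(P_L)$ means the split closure of $P_L$ with all six coordinates integer. $\operatorname{proj}_x$ denotes orthogonal projection onto the $x$-coordinates. *)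

(* Defs.v *)
From HB Require Import structures.
From mathcomp Require Import all_boot all_order all_algebra.
From mathcomp Require Import classical_sets reals.
Set Implicit Arguments. Unset Strict Implicit. Unset Printing Implicit Defensive.
Import Order.TTheory GRing.Theory Num.Theory.
Local Open Scope ring_scope.
Local Open Scope classical_set_scope.

(* Points of R^n are functions 'I_n -> R; coordinate j is x j (0-based). *)

Definition idot (R : realType) (n : nat) (pi : 'I_n -> int) (x : 'I_n -> R) : R :=
  \sum_(i < n) (pi i)%:~R * x i.

Definition split_set (R : realType) (n : nat) (pi : 'I_n -> int) (pi0 : int)
  : set ('I_n -> R) :=
  [set x | pi0%:~R < idot pi x < (pi0 + 1)%:~R].

Definition conv (R : realType) (n : nat) (X : set ('I_n -> R)) : set ('I_n -> R) :=
  [set y | exists (k : nat) (lam : 'I_k -> R) (p : 'I_k -> 'I_n -> R),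
     [/\ (forall i, 0 <= lam i), \sum_(i < k) lam i = 1, (forall i, X (p i))
       & (forall j, y j = \sum_(i < k) lam i * p i j)]].

Definition split_closure (R : realType) (n : nat) (X : set ('I_n -> R))
  (J : {set 'I_n}) : set ('I_n -> R) :=
  [set y | forall (pi : 'I_n -> int) (pi0 : int),
     (forall j, j \notin J -> pi j = 0) -> conv (X `\` split_set pi pi0) y].

(* P = { x in [0,2]^2 : 2x1 + x2 <= 5, -2x1 + 3x2 <= 3 }, x1 = x 0, x2 = x 1 *)
Definition x1_2 : 'I_2 := @Ordinal 2 0 isT.
Definition x2_2 : 'I_2 := @Ordinal 2 1 isT.

Definition P (R : realType) : set ('I_2 -> R) :=
  [set x | (forall i, 0 <= x i <= 2)
     /\ 2 * x x1_2 + x x2_2 <= 5 /\ - 2 * x x1_2 + 3 * x x2_2 <= 3].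

(* coordinates of R^6 = (x1, x2, z11, z12, z21, z22) at indices 0..5 *)
Definition c6 (k : nat) (h : (k < 6)%N) : 'I_6 := Ordinal h.

Definition proj_x (R : realType) (y : 'I_6 -> R) : 'I_2 -> R :=
  fun i => y (widen_ord (isT : (2 <= 6)%N) i).

Definition P_L (R : realType) : set ('I_6 -> R) :=
  [set y | P (proj_x y)
     /\ (forall k (h : (2 <= k)%N) (h' : (k < 6)%N), 0 <= y (c6 h') <= 1)
     /\ y (c6 (isT : (0 < 6)%N)) = y (c6 (isT : (2 < 6)%N)) + 2 * y (c6 (isT : (3 < 6)%N))
     /\ y (c6 (isT : (1 < 6)%N)) = y (c6 (isT : (4 < 6)%N)) + 2 * y (c6 (isT : (5 < 6)%N))].

(* Main.v *)
Require Import Defs.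
From HB Require Import structures.
From mathcomp Require Import all_boot all_order all_algebra.
From mathcomp Require Import classical_sets reals.
From mathcomp Require Import ring lra zify.
Import Order.TTheory GRing.Theory Num.Theory.
Local Open Scope ring_scope.
Local Open Scope classical_set_scope.

Lemma conv_lin {R : realType} n (X : set ('I_n -> R)) (a : 'I_n -> R) c y :
  (forall p, X p -> \sum_j a j * p j <= c) -> conv X y -> \sum_j a j * y j <= c.
Proof.
move=> H [k [lam [p [H0 H1 H2 H3]]]].
have -> : \sum_j a j * y j = \sum_i lam i * (\sum_j a j * p i j).
  under eq_bigr do rewrite H3 mulr_sumr.
  rewrite exchange_big /=; apply: eq_bigr => i _; rewrite mulr_sumr.
  by apply: eq_bigr => j _; rewrite mulrCA.
apply: le_trans (_ : \sum_i lam i * c <= c).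
  by apply: ler_sum => i _; apply: ler_wpM2l; [exact: H0 | exact: H].
by rewrite -mulr_suml H1 mul1r.
Qed.

Lemma conv3 {R : realType} n (X : set ('I_n -> R)) (p1 p2 p3 : 'I_n -> R) l1 l2 l3 y :
  X p1 -> X p2 -> X p3 -> 0 <= l1 -> 0 <= l2 -> 0 <= l3 -> l1 + l2 + l3 = 1 ->
  (forall j, y j = l1 * p1 j + l2 * p2 j + l3 * p3 j) -> conv X y.
Proof.
move=> X1 X2 X3 h1 h2 h3 hs hy.
exists 3%N, (fun i : 'I_3 => nth 0 [:: l1; l2; l3] i), (fun i : 'I_3 => nth p1 [:: p1; p2; p3] i).
split.
- by case=> [[|[|[|i]]] hi] /=.
- by rewrite !big_ord_recr big_ord0 /= add0r.
- by case=> [[|[|[|i]]] hi] /=.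
- by move=> j; rewrite !big_ord_recr big_ord0 /= add0r.
Qed.

Notation c0 := (c6 (isT : (0 < 6)%N)).
Notation c1 := (c6 (isT : (1 < 6)%N)).
Notation c2 := (c6 (isT : (2 < 6)%N)).
Notation c3 := (c6 (isT : (3 < 6)%N)).
Notation c4 := (c6 (isT : (4 < 6)%N)).
Notation c5 := (c6 (isT : (5 < 6)%N)).

Ltac simpz := rewrite ?mulr0z ?mulr1z ?mulrN1z ?mul0r ?mul1r ?mulN1r ?add0r ?addr0.

Lemma sum6 {R : realType} (F : 'I_6 -> R) :
  \sum_j F j = F c0 + F c1 + F c2 + F c3 + F c4 + F c5.
Proof.
rewrite !big_ord_recl big_ord0 addr0 !addrA.
by do ![congr (_ + _)|congr F; apply: val_inj].
Qed.

Lemma sum2 {R : realType} (F : 'I_2 -> R) :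
  \sum_j F j = F x1_2 + F x2_2.
Proof.
rewrite !big_ord_recl big_ord0 addr0.
by do ![congr (_ + _)|congr F; apply: val_inj].
Qed.

Lemma projE {R : realType} (p : 'I_6 -> R) : proj_x p x1_2 = p c0 /\ proj_x p x2_2 = p c1.
Proof. by split; rewrite /proj_x; congr p; apply: val_inj. Qed.

Lemma PL_E {R : realType} {p : 'I_6 -> R} : P_L p ->
  [/\ 0 <= p c0, p c0 <= 2, 0 <= p c1, p c1 <= 2 &
  [/\ 2 * p c0 + p c1 <= 5, - 2 * p c0 + 3 * p c1 <= 3,
      p c0 = p c2 + 2 * p c3 & p c1 = p c4 + 2 * p c5]] /\
  [/\ 0 <= p c2, p c2 <= 1, 0 <= p c3, p c3 <= 1 &
   [/\ 0 <= p c4, p c4 <= 1, 0 <= p c5 & p c5 <= 1]].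
Proof.
case=> [[hb [h1 h2]] [hz [e1 e2]]].
case: (projE p) => E0 E1.
rewrite E0 E1 in h1 h2.
move: (hb x1_2) (hb x2_2); rewrite E0 E1 => /andP[a1 a2] /andP[b1 b2].
move: (hz 2%N isT isT) (hz 3%N isT isT) (hz 4%N isT isT) (hz 5%N isT isT).
move=> /andP[? ?] /andP[? ?] /andP[? ?] /andP[? ?].
by split; split.
Qed.

Lemma notS {R : realType} (pi0 : int) (v : R) :
  ~ (pi0%:~R < v < (pi0 + 1)%:~R) -> v <= pi0%:~R \/ pi0%:~R + 1 <= v.
Proof.
move/negP; rewrite negb_and -!leNgt intrD => /orP[h|h]; [left|right] => //.
Qed.

Lemma ineq6 {R : realType} {y : 'I_6 -> R} {pv : 'I_6 -> int} {q0 : int}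
  {a : 'I_6 -> R} {c : R} :
  conv (@P_L R `\` split_set pv q0) y ->
  (forall p, P_L p -> (idot pv p <= q0%:~R \/ q0%:~R + 1 <= idot pv p) ->
     \sum_j a j * p j <= c) -> \sum_j a j * y j <= c.
Proof.
move=> hc H; move: hc; apply: conv_lin => p [hp hs]; apply: H => //.
exact: notS.
Qed.


Ltac pl hp := case: (PL_E hp) => [[? ? ? ? [? ? ? ?]] [? ? ? ? [? ? ? ?]]].

Definition mk2 {R : realType} (u w : R) : 'I_2 -> R :=
  fun i => if val i == 0%N then u else w.

Definition xs (R : realType) : 'I_2 -> R := mk2 (5 / 4) (3 / 2).

Lemma part1 (R : realType) :
  (@proj_x R) @` split_closure (@P_L R) [set: 'I_6] `<=` split_closure (@P R) [set: 'I_2].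
Proof.
move=> _ [y Hy <-] pi pi0 _.
pose pi6 : 'I_6 -> int := fun j =>
  if val j == 0%N then pi x1_2 else if val j == 1%N then pi x2_2 else 0.
have hid : forall q : 'I_6 -> R, idot pi6 q = idot pi (proj_x q).
  move=> q; rewrite /idot sum6 sum2 /=; case: (projE q) => -> ->; simpz; done.
have [k [lam [p [H0 H1 H2 H3]]]] :
    conv (@P_L R `\` split_set pi6 pi0) y.
  by apply: Hy => j; rewrite inE.
exists k, lam, (fun i => proj_x (p i)); split => //.
  move=> i; case: (H2 i) => hP hS; split; first exact: hP.1.
  by move: hS; rewrite /split_set /= hid.
by move=> j; rewrite /proj_x H3.
Qed.

Lemma part2b (R : realType) :
  ~ ((@proj_x R) @` split_closure (@P_L R) [set: 'I_6]) (xs R).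
Proof.
case=> y Hy Ey.
have Hc : forall pi pi0, conv (@P_L R `\` split_set pi pi0) y.
  by move=> pi pi0; apply: Hy => j; rewrite inE.
have ey1 : y c1 = 3 / 2.
  by have := congr1 (fun f => f x2_2) Ey; rewrite /= (projE y).2.
have i1 : \sum_j (fun j : 'I_6 => nth 0 [:: 0; 0; 1; 1; 1; 1] (val j)) j * y j <= 2.
  apply: (ineq6 (Hc (fun j : 'I_6 => nth 0 [:: 0; 0; 1; 1; 1; 1] (val j)) 2)) => p hp.
  pl hp; rewrite /idot !sum6 /=; simpz; lra.
have i2 : \sum_j (fun j : 'I_6 => nth 0 [:: 0; 0; 0; -1; 0; 1] (val j)) j * y j <= 0.
  apply: (ineq6 (Hc (fun j : 'I_6 => nth 0 [:: 0; 0; 0; -1; 0; 1] (val j)) 0)) => p hp.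
  pl hp; rewrite /idot !sum6 /=; simpz; lra.
have i3 : \sum_j (fun j : 'I_6 => nth 0 [:: 0; 0; -2; 0; 3; 6] (val j)) j * y j <= 3.
  apply: (ineq6 (Hc (fun j : 'I_6 => nth 0 [:: 0; 0; 0; 1; 0; 0] (val j)) 0)) => p hp.
  pl hp; rewrite /idot !sum6 /=; simpz; lra.
have i4 : \sum_j (fun j : 'I_6 => nth 0 [:: 0; 1; 0; 0; -1; -2] (val j)) j * y j <= 0.
  apply: (ineq6 (Hc (fun j : 'I_6 => nth 0 [:: 0; 0; 0; 1; 0; 0] (val j)) 0)) => p hp.
  pl hp; rewrite /idot !sum6 /=; simpz; lra.
have i5 : \sum_j (fun j : 'I_6 => nth 0 [:: 0; -1; 0; 0; 1; 2] (val j)) j * y j <= 0.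
  apply: (ineq6 (Hc (fun j : 'I_6 => nth 0 [:: 0; 0; 0; 1; 0; 0] (val j)) 0)) => p hp.
  pl hp; rewrite /idot !sum6 /=; simpz; lra.
move: i1 i2 i3 i4 i5; rewrite !sum6 /=; simpz => i1 i2 i3 i4 i5.
clear Ey Hy Hc; lra.
Qed.

Lemma P_mk2 {R : realType} (u w : R) : 0 <= u -> u <= 2 -> 0 <= w -> w <= 2 ->
  2 * u + w <= 5 -> - 2 * u + 3 * w <= 3 -> P (mk2 u w).
Proof.
move=> h1 h2 h3 h4 h5 h6; split; last by rewrite /mk2 /=; split.
by case=> [[|[|i]] hi] //=; apply/andP.
Qed.

Lemma idE {R : realType} (pi : 'I_2 -> int) (u w : R) :
  idot pi (mk2 u w) = (pi x1_2)%:~R * u + (pi x2_2)%:~R * w.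
Proof. by rewrite /idot sum2 /mk2 /=. Qed.

Lemma notbet {R : realType} (z k : int) : ~ ((z%:~R : R) < (k%:~R : R) < ((z + 1)%:~R : R)).
Proof. by rewrite !ltr_int; apply/negP; rewrite negb_and -!leNgt; lia. Qed.

Lemma ptE {R : realType} (pi : 'I_2 -> int) (pi0 : int) :
  (@P R `\` split_set pi pi0) (mk2 (2 : R) 1).
Proof.
split; first by apply: P_mk2; lra.
rewrite /split_set /= idE.
have -> : (pi x1_2)%:~R * 2 + (pi x2_2)%:~R * 1 = ((2 * pi x1_2 + pi x2_2)%:~R : R).
  by rewrite intrD intrM; lra.
exact: notbet.
Qed.

Lemma ptF {R : realType} (pi : 'I_2 -> int) (pi0 : int) :
  (@P R `\` split_set pi pi0) (mk2 (0 : R) 1).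
Proof.
split; first by apply: P_mk2; lra.
rewrite /split_set /= idE.
have -> : (pi x1_2)%:~R * 0 + (pi x2_2)%:~R * 1 = ((pi x2_2)%:~R : R) by lra.
exact: notbet.
Qed.

Lemma caseQ2 {R : realType} (pi : 'I_2 -> int) (pi0 : int) (N : R) : 3 <= N ->
  (3 * (pi x1_2)%:~R + 2 * (pi x2_2)%:~R = N \/ 3 * (pi x1_2)%:~R + 2 * (pi x2_2)%:~R = - N) ->
  3 * (pi x1_2)%:~R + 4 * (pi x2_2)%:~R = 2 * (pi0%:~R : R) + 1 ->
  conv (@P R `\` split_set pi pi0) (xs R).
Proof.
set a : R := (pi x1_2)%:~R; set b : R := (pi x2_2)%:~R; set c : R := pi0%:~R.
move=> hN hs hr.
have hN0 : N != 0 by rewrite gt_eqF //; lra.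
set t := N^-1.
have Nt : N * t = 1 by rewrite /t mulfV.
have t0 : 0 < t by rewrite /t invr_gt0; lra.
have t3 : t <= 1/3 by nra.
have hst : (3 * a + 2 * b) * t = 1 \/ (3 * a + 2 * b) * t = -1.
  by case: hs => ->; [left | right; rewrite mulNr Nt].
have ht1 : 1 - t != 0 by rewrite gt_eqF //; lra.
set w := (2 * (1 - t))^-1.
have hw : w * (1 - t) = 1 / 2 by rewrite /w; field; rewrite ht1 /=; lra.
have w0 : 0 <= w by rewrite /w invr_ge0; lra.
have w3 : w <= 3 / 4 by nra.
apply: (@conv3 R 2%N _ (mk2 2 1) (mk2 (3/2 - 3/2 * t) (2 - t)) (mk2 0 1) (1/4) w (3/4 - w)).
- exact: ptE.
- split; first by apply: P_mk2; lra.
  rewrite /split_set /= idE -/a -/b.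
  have -> : a * (3/2 - 3/2 * t) + b * (2 - t) = (3 * a + 4 * b) / 2 - ((3 * a + 2 * b) * t) / 2 by field.
  rewrite intrD /= -/c; simpz.
  by case: hst => ->; move/andP; lra.
- exact: ptF.
- lra.
- exact: w0.
- lra.
- lra.
- by case=> [[|[|j]] hj] //=; rewrite /xs /mk2 /=; nra.
Qed.

Lemma caseQ1 {R : realType} (pi : 'I_2 -> int) (pi0 : int) (N : R) : 3 <= N ->
  ((pi x1_2)%:~R - 2 * (pi x2_2)%:~R = N \/ (pi x1_2)%:~R - 2 * (pi x2_2)%:~R = - N) ->
  3 * (pi x1_2)%:~R + 4 * (pi x2_2)%:~R = 2 * (pi0%:~R : R) + 1 ->
  conv (@P R `\` split_set pi pi0) (xs R).
Proof.
set a : R := (pi x1_2)%:~R; set b : R := (pi x2_2)%:~R; set c : R := pi0%:~R.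
move=> hN hs hr.
have hN0 : N != 0 by rewrite gt_eqF //; lra.
set t := N^-1.
have Nt : N * t = 1 by rewrite /t mulfV.
have t0 : 0 < t by rewrite /t invr_gt0; lra.
have t3 : t <= 1/3 by nra.
have hst : (a - 2 * b) * t = 1 \/ (a - 2 * b) * t = -1.
  by case: hs => ->; [left | right; rewrite mulNr Nt].
have ht1 : 1 - t != 0 by rewrite gt_eqF //; lra.
set w := (2 * (1 - t))^-1.
have hw : w * (1 - t) = 1 / 2 by rewrite /w; field; rewrite ht1 /=; lra.
have w0 : 0 <= w by rewrite /w invr_ge0; lra.
have w3 : w <= 3 / 4 by nra.
apply: (@conv3 R 2%N _ (mk2 0 1) (mk2 (3/2 + t/2) (2 - t)) (mk2 2 1) (1/4) w (3/4 - w)).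
- exact: ptF.
- split; first by apply: P_mk2; lra.
  rewrite /split_set /= idE -/a -/b.
  have -> : a * (3/2 + t/2) + b * (2 - t) = (3 * a + 4 * b) / 2 + ((a - 2 * b) * t) / 2 by field.
  rewrite intrD /= -/c; simpz.
  by case: hst => ->; move/andP; lra.
- exact: ptE.
- lra.
- exact: w0.
- lra.
- lra.
- by case=> [[|[|j]] hj] //=; rewrite /xs /mk2 /=; nra.
Qed.

Lemma xs_in_SCP (R : realType) : split_closure (@P R) [set: 'I_2] (xs R).
Proof.
move=> pi pi0 _.
have [hv|hv] := boolP (((pi0%:~R : R) < (pi x1_2)%:~R * (3/2) + (pi x2_2)%:~R * 2)
   && ((pi x1_2)%:~R * (3/2) + (pi x2_2)%:~R * 2 < ((pi0 + 1)%:~R : R))); last first.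
  apply: (@conv3 R 2%N _ (mk2 (3/2) 2) (mk2 2 1) (mk2 0 1) (1/2) (1/4) (1/4)).
  - split; first by apply: P_mk2; lra.
    by rewrite /split_set /= idE; apply/negP.
  - exact: ptE.
  - exact: ptF.
  - lra.
  - lra.
  - lra.
  - lra.
  - by case=> [[|[|j]] hj] //=; rewrite /xs /mk2 /=; lra.
move/andP: hv; rewrite intrD; simpz => -[h1 h2].
have Hint : 3 * pi x1_2 + 4 * pi x2_2 = 2 * pi0 + 1.
  have g1 : ((2 * pi0)%:~R : R) < (3 * pi x1_2 + 4 * pi x2_2)%:~R.
    by rewrite !intrD !intrM; lra.
  have g2 : ((3 * pi x1_2 + 4 * pi x2_2)%:~R : R) < (2 * pi0 + 2)%:~R.
    by rewrite !intrD !intrM; lra.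
  rewrite !ltr_int in g1 g2; lia.
have Hr : 3 * (pi x1_2)%:~R + 4 * (pi x2_2)%:~R = 2 * (pi0%:~R : R) + 1.
  have := congr1 (fun z : int => (z%:~R : R)) Hint; rewrite /= !intrD !intrM; lra.
have [hm|hm] : (pi x1_2 - 2 * pi x2_2 = 1 \/ pi x1_2 - 2 * pi x2_2 = -1) \/
    (3 <= pi x1_2 - 2 * pi x2_2 \/ pi x1_2 - 2 * pi x2_2 <= -3) by lia.
- have [hn|hn] : 3 <= 3 * pi x1_2 + 2 * pi x2_2 \/ 3 * pi x1_2 + 2 * pi x2_2 <= -3 by lia.
  + apply: (caseQ2 pi pi0 ((3 * pi x1_2 + 2 * pi x2_2)%:~R)) => //.
      by move: hn; rewrite -(ler_int R) => hn; lra.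
    by left; rewrite intrD !intrM; lra.
  + apply: (caseQ2 pi pi0 (- (3 * pi x1_2 + 2 * pi x2_2)%:~R)) => //.
      by move: hn; rewrite -(ler_int R) intrD !intrM => hn; lra.
    by right; rewrite intrD !intrM; lra.
- case: hm => hm.
  + apply: (caseQ1 pi pi0 ((pi x1_2 - 2 * pi x2_2)%:~R)) => //.
      by move: hm; rewrite -(ler_int R) => hm; lra.
    by left; rewrite intrB !intrM; lra.
  + apply: (caseQ1 pi pi0 (- (pi x1_2 - 2 * pi x2_2)%:~R)) => //.
      by move: hm; rewrite -(ler_int R) intrB !intrM => hm; lra.
    by right; rewrite intrB !intrM; lra.
Qed.

Theorem theorem1 (R : realType) :
  let SCPL := split_closure (@P_L R) [set: 'I_6] in
  let SCP := split_closure (@P R) [set: 'I_2] in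
  (@proj_x R) @` SCPL `<=` SCP /\ (@proj_x R) @` SCPL <> SCP.
Proof.
move=> SCPL SCP; split; first exact: part1.
move=> E; apply: (part2b R); rewrite -/SCPL E; exact: xs_in_SCP.
Qed.
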